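(* For every election, every candidate that \textsc{PluralityMatching} may return (i.e.\ every candidate $a$ whose integral domination graph $G(a)$ admits a perfect matching) lies in the matching uncovered set. Consequently, the matching uncovered set of every election is non-empty.
   Context: An election: voters $V$ (finite, nonempty), candidates $C$ (finite, nonempty), a profile of linear orders $\sigma_i$ over $C$; $a\succeq_i c$ means $a=c$ or $i$ ranks $a$ above $c$; $\mathrm{top}(i)$ is $i$'s first choice. The integral domination graph $G(a)$ is the bipartite graph with both sides copies of $V$ and edge $(i,j)$ iff $a\succeq_i\mathrm{top}(j)$. The separation graph $G(a,b)$ of candidates $a,b$ is the bipartite graph with both sides copies of $V$ and edge $(i,j)$ iff there exists $c\in C$ with $a\succeq_i c$ and $c\succeq_j b$. The matching uncovered set is the set of candidates $a$ such that for every $b\in C$, $G(a,b)$ admits a perfect matching. \textsc{PluralityMatching} returns an arbitrary candidate $a$ whose $G(a)$ admits a perfect matching. *)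

(* Defs.v *)
From mathcomp Require Import all_boot all_order all_fingroup.
Set Implicit Arguments. Unset Strict Implicit. Unset Printing Implicit Defensive.

(* A profile: for every voter i, a strict linear order [pref i] over C
   ([pref i a b] means voter i ranks a strictly above b). *)
Record profile (V C : finType) := Profile {
  pref : V -> rel C;
  pref_irrefl : forall i a, ~~ pref i a a;
  pref_trans : forall i a b c, pref i a b -> pref i b c -> pref i a c;
  pref_total : forall i a b, a != b -> pref i a b || pref i b a
}.

Section Election.
Variables (V C : finType) (P : profile V C).

Definition wpref (i : V) (a c : C) : bool := (a == c) || pref P i a c.

(* top(i): voter i's first choice (Some c with c weakly preferred to every d;
   it always exists when C is nonempty). *)
Definition top (i : V) : option C := [pick c | [forall d, wpref i c d]].

(* Bipartite graphs with both sides copies of V, given by their edge relation;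
   a perfect matching is a bijection f : V -> V with every (i, f i) an edge. *)
Definition has_perfect_matching (G : V -> V -> bool) : Prop :=
  exists f : {perm V}, forall i, G i (f i).

Definition dom_graph (a : C) (i j : V) : bool :=
  if top j is Some t then wpref i a t else false.

Definition sep_graph (a b : C) (i j : V) : bool :=
  [exists c, wpref i a c && wpref j c b].

Definition matching_uncovered (a : C) : Prop :=
  forall b : C, has_perfect_matching (sep_graph a b).

End Election.

(* Main.v *)
Require Import Defs.
From mathcomp Require Import all_boot all_order all_fingroup.
Set Implicit Arguments. Unset Strict Implicit. Unset Printing Implicit Defensive.

Lemma ext_elem (C : finType) (r : rel C) (A : {set C}) :
  (forall a, ~~ r a a) -> (forall a b c, r a b -> r b c -> r a c) ->
  (forall a b, a != b -> r a b || r b a) ->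
  A != set0 -> exists2 c, c \in A & forall d, d \in A -> (c == d) || r c d.
Proof.
move=> irr tr tot /set0Pn [c0 c0A].
case: (arg_minnP (fun c => #|[set d in A | r d c]|) c0A) => c cA cmin.
exists c => // d dA; case: eqVneq => //= ncd.
case/orP: (tot c d ncd) => // rdc.
have := cmin d dA; rewrite leqNgt => /negP; case.
apply: proper_card; apply/properP; split.
  apply/subsetP => x; rewrite !inE => /andP [-> /= rxd]; exact: tr rxd rdc.
exists d; rewrite !inE ?dA ?rdc //= irr.
Qed.

Section S.
Variables (V C : finType) (P : profile V C) (tp : V -> C).

Lemma veto n : forall S T : {set V}, #|S| = n.+1 -> #|T| = n.+1 ->
  exists a, exists f : V -> V,
   [/\ a \in tp @: T, {in S &, injective f}, {in S, forall x, f x \in T} &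
       {in S, forall i, wpref P i a (tp (f i))}].
Proof.
elim: n => [|n IH] S T hS hT.
- have [i Si] : exists i, i \in S by apply/set0Pn; rewrite -card_gt0 hS.
  have [j Tj] : exists j, j \in T by apply/set0Pn; rewrite -card_gt0 hT.
  have eS : S = [set i] by apply/eqP; rewrite eq_sym eqEcard sub1set Si cards1 hS.
  exists (tp j), (fun _ => j); split.
  + by apply: imset_f.
  + by move=> x y; rewrite eS !inE => /eqP -> /eqP ->.
  + by [].
  + by move=> x _; rewrite /wpref eqxx.
- have [i Si] : exists i, i \in S by apply/set0Pn; rewrite -card_gt0 hS.
  have Tn0 : tp @: T != set0.
    apply/set0Pn; have [j Tj] : exists j, j \in T by apply/set0Pn; rewrite -card_gt0 hT.
    by exists (tp j); apply: imset_f.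
  have tot' : forall a b, a != b -> pref P i b a || pref P i a b.
    by move=> a b h; rewrite orbC; apply: pref_total.
  have [c /imsetP [j Tj ->] cmin] := @ext_elem C (fun x y => pref P i y x) _
     (pref_irrefl P i) (fun a b c h1 h2 => pref_trans h2 h1) tot' Tn0.
  have hS' : #|S :\ i| = n.+1 by rewrite (cardsD1 i S) Si in hS; case: hS.
  have hT' : #|T :\ j| = n.+1 by rewrite (cardsD1 j T) Tj in hT; case: hT.
  have [a [f [aT finj fT fw]]] := IH _ _ hS' hT'.
  exists a, (fun x => if x == i then j else f x); split.
  + by case/imsetP: aT => k; rewrite inE => /andP [_ kT] ->; apply: imset_f.
  + move=> x y xS yS /=.
    case: (eqVneq x i) => [->|xi]; case: (eqVneq y i) => [->|yi] //.
    * move=> ejf; have : f y \in T :\ j by apply: fT; rewrite !inE yi.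
      by rewrite -ejf !inE eqxx.
    * move=> efj; have : f x \in T :\ j by apply: fT; rewrite !inE xi.
      by rewrite efj !inE eqxx.
    * by apply: finj; rewrite !inE ?xi ?yi.
  + move=> x xS /=; case: (eqVneq x i) => // xi.
    by have := fT x; rewrite !inE xi xS => /(_ isT) /andP [].
  + move=> x xS /=; case: (eqVneq x i) => [->|xi]; last by apply: fw; rewrite !inE xi.
    case/imsetP: aT => k; rewrite inE => /andP [_ kT] ->.
    have := cmin (tp k) (imset_f _ kT); rewrite /wpref eq_sym.
    by case/orP => [->|->] //; rewrite orbT.
Qed.
End S.

Theorem proposition1 (V C : finType) (P : profile V C) :
  0 < #|V| -> 0 < #|C| ->
  (forall a : C, has_perfect_matching (dom_graph P a) -> matching_uncovered P a) /\
  (exists a : C, matching_uncovered P a).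
Proof.
move=> hV hC.
have part1 : forall a : C, has_perfect_matching (dom_graph P a) -> matching_uncovered P a.
  move=> a [f hf] b; exists f => i; have := hf i; rewrite /dom_graph /sep_graph /top.
  case: (pickP (fun c => [forall d, wpref P (f i) c d])) => // t /forallP ht hw.
  by apply/existsP; exists t; rewrite hw ht.
split => //.
case/card_gt0P: hC => c0 _.
pose tp j := odflt c0 (top P j).
have htop : forall j, top P j = Some (tp j).
  move=> j; rewrite /tp /top; case: (pickP (fun c => [forall d, wpref P j c d])) => // hn.
  have hT : [set: C] != set0 by apply/set0Pn; exists c0.
  have [c _ hc] := @ext_elem C (pref P j) setT (pref_irrefl P j) (@pref_trans _ _ P j)
       (@pref_total _ _ P j) hT.
  have := hn c; move/negbT/negP; case; apply/forallP => d; exact: hc.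
have hc : #|[set: V]| = (#|V|.-1).+1 by rewrite cardsT prednK.
have [a [f [_ finj _ fw]]] := @veto V C P tp (#|V|.-1) setT setT hc hc.
have finj' : injective f by move=> x y; apply: finj; rewrite inE.
exists a; apply: part1; exists (perm finj') => i.
by rewrite permE /dom_graph htop; apply: fw; rewrite inE.
Qed.
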